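(* Let $P_{X,Y}$ be a non-trivial primitive on finite sets $\mathcal X\times\mathcal Y$. Then its canonical embedding $|\psi_{\vec 0}\rangle=\sum_{x,y}\sqrt{P_{X,Y}(x,y)}\,|x\rangle_A|y\rangle_B$ is a non-trivial regular embedding, i.e. $S(X\searrow Y\,|\,B)>0$ and $S(Y\searrow X\,|\,A)>0$.
   Context: A primitive is a joint probability distribution $P_{X,Y}$ on finite sets $\mathcal X\times\mathcal Y$. Dependent part: for $f_X(x):=P_{Y|X=x}$ (the conditional distribution of $Y$ given $X=x$), define the random variable $X\searrow Y:=f_X(X)$; symmetrically $Y\searrow X:=f_Y(Y)$ with $f_Y(y)=P_{X|Y=y}$. $P_{X,Y}$ is trivial if $H(X\searrow Y\,|\,Y)=0$ (equivalently $H(Y\searrow X\,|\,X)=0$), non-trivial otherwise; $H$ is Shannon entropy (base 2). A regular embedding of $P_{X,Y}$ is a state in $\mathcal H_A\otimes\mathcal H_B$ (with computational bases $\{|x\rangle\}_{x\in\mathcal X}$, $\{|y\rangle\}_{y\in\mathcal Y}$) of the form $\sum_{x,y}e^{i\theta(x,y)}\sqrt{P_{X,Y}(x,y)}|x\rangle_A|y\rangle_B$ for a real function $\theta$; the canonical one has $\theta\equiv 0$. A regular embedding is trivial if $S(X\searrow Y|B)=0$ or $S(Y\searrow X|A)=0$, and non-trivial otherwise. Here $S(X\searrow Y|B)$ is the von Neumann conditional entropy $S(PQ)-S(Q)$ of the classical-quantum state obtained by measuring register $A$ in the computational basis, obtaining $X$, and computing $X\searrow Y$, with $B$ kept quantum;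 $S(Y\searrow X|A)$ is defined symmetrically. *)

(* Defs.v *)
From HB Require Import structures.
From mathcomp Require Import all_boot all_order all_algebra.
From mathcomp Require Import reals exp trigo.
From mathcomp Require Import complex.

Set Implicit Arguments.
Unset Strict Implicit.
Unset Printing Implicit Defensive.

Import Order.TTheory GRing.Theory Num.Theory.
Local Open Scope ring_scope.

Section QDefs.
Variable R : realType.
Local Notation C := R[i].

Definition log2 (t : R) : R := ln t / ln 2.
Definition xlog2x (t : R) : R := if 0 < t then t * log2 t else 0.

Section Classical.
Variables X Y : finType.

Definition is_primitive (P : X -> Y -> R) : Prop :=
  (forall x y, 0 <= P x y) /\ \sum_(x : X) \sum_(y : Y) P x y = 1.

Definition marginalX (P : X -> Y -> R) (x : X) : R := \sum_(y : Y) P x y.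
Definition marginalY (P : X -> Y -> R) (y : Y) : R := \sum_(x : X) P x y.

(* f_X(x) = P_{Y|X=x} (only relevant when P_X(x) > 0) *)
Definition condYgX (P : X -> Y -> R) (x : X) : {ffun Y -> R} :=
  [ffun y => P x y / marginalX P x].

(* X \searrow Y := f_X(X) is the random variable (depX P) applied to X *)
Definition depX (P : X -> Y -> R) : X -> {ffun Y -> R} := condYgX P.

Definition values (T : eqType) (g : X -> T) : seq T := undup [seq g x | x <- enum X].

Definition HY (P : X -> Y -> R) : R := - \sum_(y : Y) xlog2x (marginalY P y).

Definition H_joint (P : X -> Y -> R) (T : eqType) (g : X -> T) : R :=
  - \sum_(v <- values g) \sum_(y : Y) xlog2x (\sum_(x : X | g x == v) P x y).

Definition H_cond (P : X -> Y -> R) (T : eqType) (g : X -> T) : R :=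
  H_joint P g - HY P.

Definition trivial_primitive (P : X -> Y -> R) : Prop := H_cond P (depX P) = 0.
Definition nontrivial_primitive (P : X -> Y -> R) : Prop := ~ trivial_primitive P.
End Classical.

Definition swapP (X Y : finType) (P : X -> Y -> R) : Y -> X -> R := fun y x => P x y.

(* an operator on C^T (computational basis indexed by T) given by its entries *)
Definition op_of (T : finType) (f : T -> T -> C) : 'M[C]_#|T| :=
  \matrix_(i, j) f (enum_val i) (enum_val j).

(* eigenvalues (with multiplicity) = the roots of the characteristic polynomial *)
Definition spectrum (n : nat) (M : 'M[C]_n) : seq C :=
  sval (closed_field_poly_normal (char_poly M)).

Definition vN_entropy (n : nat) (M : 'M[C]_n) : R :=
  - \sum_(z <- spectrum M) xlog2x (complex.Re z).

Section Quantum.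
Variables X Y : finType.

(* a pure state on H_A (x) H_B given by amplitudes psi x y *)
Definition rhoB (psi : X -> Y -> C) : 'M[C]_#|Y| :=
  op_of (fun y y' => \sum_(x : X) psi x y * conjc (psi x y')).

(* classical-quantum state on (register of Z = g(X)) (x) B obtained by measuring
   A in the computational basis, computing Z = g(X) and discarding X:
   rho_ZB = sum_v |v><v| (x) sum_{x | g x = v} psi(x,.) psi(x,.)^*  *)
Definition rhoZB (psi : X -> Y -> C) (T : eqType) (g : X -> T)
  : 'M[C]_#|{: 'I_(size (values g)) * Y}| :=
  op_of (fun (ky ky' : 'I_(size (values g)) * Y) =>
    if ky.1 == ky'.1 then
      \sum_(x : X | g x == tnth (in_tuple (values g)) ky.1) psi x ky.2 * conjc (psi x ky'.2)
    else 0).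

Definition S_cond (psi : X -> Y -> C) (T : eqType) (g : X -> T) : R :=
  vN_entropy (rhoZB psi g) - vN_entropy (rhoB psi).

Definition regular_embedding (P : X -> Y -> R) (theta : X -> Y -> R) : X -> Y -> C :=
  fun x y => (cos (theta x y) +i* sin (theta x y))%C * (Num.sqrt (P x y))%:C%C.

Definition canonical_embedding (P : X -> Y -> R) : X -> Y -> C :=
  regular_embedding P (fun _ _ => 0).
End Quantum.

Definition swap_state (X Y : finType) (psi : X -> Y -> C) : Y -> X -> C :=
  fun y x => psi x y.

Definition S_XdepY_B (X Y : finType) (P : X -> Y -> R) (psi : X -> Y -> C) : R :=
  S_cond psi (depX P).
Definition S_YdepX_A (X Y : finType) (P : X -> Y -> R) (psi : X -> Y -> C) : R :=
  S_cond (swap_state psi) (depX (swapP P)).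

Definition nontrivial_embedding (X Y : finType) (P : X -> Y -> R) (psi : X -> Y -> C) : Prop :=
  S_XdepY_B P psi <> 0 /\ S_YdepX_A P psi <> 0.
End QDefs.

(* Main.v *)
Require Import Defs.
From HB Require Import structures.
From mathcomp Require Import all_boot all_order all_algebra.
From mathcomp Require Import reals exp trigo.
From mathcomp Require Import complex.
From mathcomp Require Import sesquilinear spectral.
From mathcomp Require Import ring lra.
Import Order.TTheory GRing.Theory Num.Theory.
Local Open Scope ring_scope.
Local Open Scope complex_scope.
Local Open Scope ring_scope.

Lemma charpoly_sim (F : fieldType) n (V U D : 'M[F]_n) :
  V *m U = 1%:M -> char_poly (V *m D *m U) = char_poly D.
Proof.
move=> VU.
rewrite /char_poly /char_poly_mx !map_mxM.
have HX : ('X%:M : 'M[{poly F}]_n) = map_mx polyC V *m 'X%:M *m map_mx polyC U.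
  by rewrite mul_mx_scalar -scalemxAl -map_mxM VU map_mx1 scalemx1.
rewrite {1}HX -mulmxBl -mulmxBr !det_mulmx mulrAC -det_mulmx -map_mxM VU map_mx1.
by rewrite det1 mul1r.
Qed.

Section Spec.
Variable R : realType.
Local Notation C := R[i].

Lemma spectrum_diag n (V U : 'M[C]_n) (d : 'rV[C]_n) :
  V *m U = 1%:M ->
  perm_eq (spectrum (V *m diag_mx d *m U)) [seq d 0 i | i <- enum 'I_n].
Proof.
move=> VU; rewrite /spectrum; case: closed_field_poly_normal => s /= Hs.
apply: prod_XsubC_eq; rewrite -[LHS]scale1r.
have <- : lead_coef (char_poly (V *m diag_mx d *m U)) = 1.
  by apply/monicP; apply: char_poly_monic.
rewrite -Hs charpoly_sim // char_poly_trig ?diag_mx_is_trig //.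
rewrite big_map big_enum /=; apply: eq_bigr => i _; by rewrite mxE eqxx mulr1n.
Qed.

Lemma spectrum_sum n (V U : 'M[C]_n) (d : 'rV[C]_n) (F : C -> R) :
  V *m U = 1%:M ->
  \sum_(z <- spectrum (V *m diag_mx d *m U)) F z = \sum_(i < n) F (d 0 i).
Proof.
move=> VU; rewrite (perm_big _ (@spectrum_diag _ _ _ d VU)) big_map big_enum //.
Qed.
End Spec.

Section Real.
Variable R : realType.

Lemma ln_le_sub1 (x : R) : 0 < x -> ln x <= x - 1.
Proof.
move=> x0; have := @le_ln1Dx R (x - 1).
rewrite addrCA subrr addr0; apply; lra.
Qed.

Lemma ln_lt_sub1 (x : R) : 0 < x -> x != 1 -> ln x < x - 1.
Proof.
move=> x0 x1; set r := Num.sqrt x.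
have r0 : 0 < r by rewrite sqrtr_gt0.
have rx : r ^+ 2 = x by rewrite sqr_sqrtr // ltW.
have r1 : r - 1 != 0 by rewrite subr_eq0; apply: contra x1 => /eqP r1; rewrite -rx r1 expr1n.
have := @ln_le_sub1 r r0; rewrite -rx lnXn //.
have : 0 < (r - 1) ^+ 2 by rewrite exprn_even_gt0.
rewrite !expr2 mulr2n. lra.
Qed.

Lemma sum_lt (I : finType) (F G : I -> R) (i0 : I) :
  (forall i, F i <= G i) -> F i0 < G i0 -> \sum_i F i < \sum_i G i.
Proof.
move=> FG Fi0; rewrite (bigD1 i0) //= [X in _ < X](bigD1 i0) //=.
by apply: ltr_leD => //; apply: ler_sum => i _.
Qed.

Lemma term_le_sum (I : finType) (F : I -> R) (i0 : I) :
  (forall i, 0 <= F i) -> F i0 <= \sum_i F i.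
Proof.
move=> F0; rewrite (bigD1 i0) //= lerDl; exact: sumr_ge0.
Qed.

Section Core.
Variables (K J : finType) (c : K -> J -> R).
Let mu j := \sum_k c k j.
Let nn k := \sum_j c k j.
Let w k j := if 0 < mu j then c k j / mu j else 0.

Lemma core_real :
  (forall k j, 0 <= c k j) ->
  (forall k, \sum_j w k j <= 1) ->
  (exists k j, 0 < c k j /\ mu j != nn k) ->
  \sum_k nn k * ln (nn k) < \sum_j mu j * ln (mu j).
Proof.
move=> c0 bes [k0 [j0 [ck0 neq0]]].
have E1 : \sum_j mu j * ln (mu j) = \sum_k \sum_j c k j * ln (mu j).
  rewrite exchange_big; apply: eq_bigr => j _; by rewrite /mu mulr_suml.
have E2 : \sum_k nn k * ln (nn k) = \sum_k \sum_j c k j * ln (nn k).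
  apply: eq_bigr => k _; by rewrite /nn mulr_suml.
have nn0 k : 0 <= nn k by apply: sumr_ge0.
have L0 : 0 <= \sum_k \sum_j (c k j - nn k * w k j).
  apply: sumr_ge0 => k _; rewrite sumrB -mulr_sumr.
  rewrite -/(nn k); have := bes k; have := nn0 k; nra.
have P0 k j : 0 < c k j -> 0 < mu j /\ 0 < nn k /\ c k j <= mu j /\ c k j <= nn k.
  move=> ckj.
  have h1 : c k j <= mu j by apply: (@term_le_sum _ (fun k => c k j)).
  have h2 : c k j <= nn k by apply: term_le_sum.
  split; first exact: lt_le_trans h1.
  split; first exact: lt_le_trans h2.
  by [].
have key k j : c k j - nn k * w k j <= c k j * ln (mu j) - c k j * ln (nn k)
   /\ (0 < c k j -> mu j != nn k ->
     c k j - nn k * w k j < c k j * ln (mu j) - c k j * ln (nn k)).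
  have [ckj|cle] := boolP (0 < c k j); last first.
    have ce : c k j = 0 by apply/eqP; rewrite eq_le c0 andbT leNgt.
    rewrite /w ce !mul0r; case: ifP => _; rewrite ?mul0r mulr0 subrr; split => //;
    by rewrite ltxx.
  have [m0 [n0 [_ _]]] := P0 k j ckj.
  rewrite /w m0.
  have hl : ln (nn k / mu j) = ln (nn k) - ln (mu j).
    by rewrite ln_div // posrE.
  have E : c k j - nn k * (c k j / mu j) = c k j * (1 - nn k / mu j).
    by rewrite mulrBr mulr1 mulrCA mulrA.
  rewrite E -mulrBr.
  have q0 : 0 < nn k / mu j by rewrite divr_gt0.
  split.
    rewrite ler_pM2l //; have := @ln_le_sub1 _ q0; rewrite hl; lra.
  move=> _ ne; rewrite ltr_pM2l //.
  have q1 : nn k / mu j != 1.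
    apply: contra ne => /eqP h; apply/eqP.
    by have := h; move/(congr1 (fun t => t * mu j)); rewrite mul1r divfK ?gt_eqF.
  have := @ln_lt_sub1 _ q0 q1; rewrite hl; lra.
rewrite E1 E2 -subr_gt0 -sumrB.
apply: le_lt_trans L0 _.
apply: (@sum_lt _ (fun k => \sum_j (c k j - nn k * w k j)) _ k0) => [k|].
  rewrite -sumrB; apply: ler_sum => j _; exact: (key k j).1.
rewrite -sumrB; apply: (@sum_lt _ (fun j => c k0 j - nn k0 * w k0 j) _ j0) => [j|].
  exact: (key k0 j).1.
exact: (key k0 j0).2.
Qed.
End Core.
End Real.

Section CoreC.
Variable R : realType.
Local Notation C := R[i].

Lemma ReC (z : C) : 0 <= z -> (complex.Re z)%:C = z.
Proof. by move=> z0; rewrite RRe_real // ger0_real. Qed.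

Lemma Re_sum (I : finType) (P : pred I) (F : I -> C) :
  complex.Re (\sum_(i | P i) F i) = \sum_(i | P i) complex.Re (F i).
Proof. by apply: (big_morph (@complex.Re R)) => // [[a b] [c d]]. Qed.

Lemma RC_sum (I : finType) (F : I -> R) :
  (\sum_i F i)%:C = \sum_i (F i)%:C :> C.
Proof. by rewrite rmorph_sum. Qed.

Lemma cM (x y : C) : (x * y)^* = x^* * y^*. Proof. exact: rmorphM. Qed.
Lemma cS (I : finType) (P : pred I) (F : I -> C) :
  (\sum_(i | P i) F i)^* = \sum_(i | P i) (F i)^*.
Proof. exact: rmorph_sum. Qed.
Lemma cDiv (x y : C) : (x / y)^* = x^* / y^*. Proof. exact: fmorph_div. Qed.
Lemma cR (r : R) : (r%:C)^* = r%:C :> C.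
Proof. by rewrite conj_Creal // complex_real. Qed.

Variables (K J : finType) (b : K -> J -> C).
Hypothesis Horth : forall j j', j != j' -> \sum_l b l j' * (b l j)^* = 0.

Let cc k j := b k j * (b k j)^*.
Let c k j : R := complex.Re (cc k j).
Let muC j := \sum_l cc l j.

Lemma ccE k j : cc k j = (c k j)%:C.
Proof. by rewrite /c ReC // mul_conjC_ge0. Qed.

Let t (a : J -> C) l := \sum_j a j * (b l j)^*.

Lemma quadsum (a : J -> C) :
  \sum_l t a l * (t a l)^* = \sum_j a j * (a j)^* * muC j.
Proof.
rewrite /t.
under eq_bigr => l _ do rewrite cS mulr_suml.
under eq_bigr => l _ do under eq_bigr => j _ do rewrite mulr_sumr.
rewrite exchange_big; apply: eq_bigr => j _ /=.
rewrite exchange_big /= (bigD1 j) //= [X in _ + X]big1 ?addr0.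
  rewrite /muC mulr_sumr. apply: eq_bigr => l _.
  rewrite cM conjCK /cc; ring.
move=> j' nj'.
have : \sum_l b l j' * (b l j)^* = 0 by apply: Horth; rewrite eq_sym.
move=> H0; rewrite (eq_bigr (fun l => a j * (a j')^* * (b l j' * (b l j)^*))).
  by rewrite -mulr_sumr H0 mulr0.
move=> l _; rewrite cM conjCK; ring.
Qed.


Let mu j := \sum_k c k j.
Let nn k := \sum_j c k j.

Lemma muCE j : muC j = (mu j)%:C.
Proof. by rewrite /muC /mu RC_sum; apply: eq_bigr => l _; rewrite ccE. Qed.

Lemma c_ge0 k j : 0 <= c k j.
Proof. by rewrite -ler0c -ccE mul_conjC_ge0. Qed.

Lemma bessel k : \sum_j (if 0 < mu j then c k j / mu j else 0) <= 1.
Proof.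
set r := \sum_j _.
have r0 : 0 <= r.
  apply: sumr_ge0 => j _; case: ifP => // m0; apply: divr_ge0 => //.
  exact: c_ge0. exact: ltW.
pose a j := if 0 < mu j then b k j / (mu j)%:C else 0.
have ht : t a k = r%:C.
  rewrite /t /r RC_sum; apply: eq_bigr => j _; rewrite /a.
  case: ifP => m0; last by rewrite mul0r.
  rewrite mulrAC -/(cc k j) ccE fmorph_div //.
have hq : \sum_l t a l * (t a l)^* = r%:C.
  rewrite quadsum /r RC_sum; apply: eq_bigr => j _; rewrite /a muCE.
  case: ifP => m0; last by rewrite !mul0r.
  have mC : (mu j)%:C != 0 :> C by rewrite fmorph_eq0 gt_eqF.
  rewrite cDiv cR fmorph_div /= -ccE /cc.
  by field.
have : t a k * (t a k)^* <= \sum_l t a l * (t a l)^*.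
  rewrite (bigD1 k) //= lerDl; apply: sumr_ge0 => l _; exact: mul_conjC_ge0.
rewrite hq ht cR -rmorphM lecR => h; nra.
Qed.


Lemma witness :
  (exists k l, k != l /\ \sum_j b k j * (b l j)^* != 0) ->
  exists k j, 0 < c k j /\ mu j != nn k.
Proof.
move=> [k [l [kl Hkl]]].
case: (boolP [exists k, exists j, (0 < c k j) && (mu j != nn k)]).
  by move=> /existsP [k' /existsP [j /andP [h1 h2]]]; exists k', j.
rewrite negb_exists => /forallP H.
have Hc j : 0 < c k j -> mu j = nn k.
  move=> h; have := H k; rewrite negb_exists => /forallP /(_ j).
  by rewrite h /= negbK => /eqP.
pose a j := b k j.
have hk : t a k = (nn k)%:C.
  by rewrite /t /nn RC_sum; apply: eq_bigr => j _; rewrite -ccE.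
have hq : \sum_l' t a l' * (t a l')^* = (nn k)%:C * (nn k)%:C.
  rewrite quadsum -rmorphM /nn mulr_suml rmorph_sum; apply: eq_bigr => j _.
  rewrite /a -/(cc k j) ccE muCE -rmorphM; congr (_ %:C).
  have [h|h] := boolP (0 < c k j); first by rewrite Hc.
  have -> : c k j = 0 by apply/eqP; rewrite eq_le c_ge0 andbT leNgt.
  by rewrite !mul0r.
have hl : 0 < t a l * (t a l)^* by rewrite mul_conjC_gt0.
move: hq; rewrite (bigD1 k) //= hk cR => /eqP.
rewrite -subr_eq0 addrC addrK => /eqP Hs.
have : t a l * (t a l)^* <= \sum_(i | i != k) t a i * (t a i)^*.
  rewrite (bigD1 l) 1?eq_sym //= lerDl; apply: sumr_ge0 => i _; exact: mul_conjC_ge0.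
by rewrite Hs => /(lt_le_trans hl); rewrite ltxx.
Qed.

Lemma core_C :
  (exists k l, k != l /\ \sum_j b k j * (b l j)^* != 0) ->
  \sum_k nn k * ln (nn k) < \sum_j mu j * ln (mu j).
Proof.
move=> /witness W.
apply: core_real => //; [exact: c_ge0 | exact: bessel].
Qed.
End CoreC.

Local Open Scope sesquilinear_scope.
Set Implicit Arguments.
Unset Strict Implicit.
Unset Printing Implicit Defensive.

Section Gram.
Variable R : realType.
Local Notation C := R[i].
Variable n : nat.

Definition gram (I : finType) (p : pred I) (f : I -> 'I_n -> C) : 'M[C]_n :=
  \matrix_(a, b) \sum_(i | p i) f i a * (f i b)^*.

Lemma gram_adj (I : finType) (p : pred I) (f : I -> 'I_n -> C) :
  (gram p f)^t* = gram p f.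
Proof.
apply/matrixP => a b; rewrite !mxE cS; apply: eq_bigr => i _.
by rewrite cM conjCK mulrC.
Qed.

Lemma gram_normal (I : finType) (p : pred I) (f : I -> 'I_n -> C) :
  gram p f \is normalmx.
Proof. by apply/normalmxP; rewrite gram_adj. Qed.

Definition ip (f u : 'I_n -> C) := \sum_a f a * (u a)^*.

Lemma gram_quad (I : finType) (p : pred I) (f : I -> 'I_n -> C) (u : 'I_n -> C) :
  \sum_a \sum_b (u a)^* * gram p f a b * u b =
  \sum_(i | p i) ip (f i) u * (ip (f i) u)^*.
Proof.
rewrite /ip.
under [RHS]eq_bigr => i _ do rewrite cS mulr_suml.
under [RHS]eq_bigr => i _ do under eq_bigr => a _ do rewrite mulr_sumr.
rewrite [RHS]exchange_big /=; apply: eq_bigr => a _.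
rewrite [RHS]exchange_big /=; apply: eq_bigr => b _.
rewrite mxE mulr_sumr mulr_suml; apply: eq_bigr => i _.
rewrite cM conjCK; ring.
Qed.

Lemma gram_conj (I : finType) (p : pred I) (f : I -> 'I_n -> C) (U : 'M[C]_n) j' j :
  (U *m gram p f *m U^t*) j' j =
  \sum_(i | p i) (\sum_a U j' a * f i a) * (\sum_a U j a * f i a)^*.
Proof.
rewrite mxE.
under eq_bigr => b _ do rewrite !mxE mulr_suml.
under [RHS]eq_bigr => i _ do rewrite cS mulr_suml.
under [RHS]eq_bigr => i _ do under eq_bigr => a _ do rewrite mulr_sumr.
rewrite [RHS]exchange_big /=.
under [RHS]eq_bigr => a _ do rewrite exchange_big /=.
rewrite [RHS]exchange_big /=; apply: eq_bigr => b _.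
apply: eq_bigr => a _.
rewrite !mxE mulr_sumr mulr_suml; apply: eq_bigr => i _.
rewrite cM; ring.
Qed.

Lemma parseval (U : 'M[C]_n) (f h : 'I_n -> C) :
  U^t* *m U = 1%:M ->
  \sum_j (\sum_a U j a * f a) * (\sum_a U j a * h a)^* = ip f h.
Proof.
move=> UU; rewrite /ip.
under eq_bigr => j _ do rewrite cS mulr_suml.
under eq_bigr => j _ do under eq_bigr => a _ do rewrite mulr_sumr.
rewrite exchange_big /=; apply: eq_bigr => a _.
rewrite exchange_big /=.
rewrite (bigD1 a) //= [X in _ + X]big1 ?addr0.
  have := congr1 (fun M : 'M[C]_n => M a a) UU; rewrite !mxE eqxx mulr1n => H.
  rewrite -[RHS]mul1r -H mulr_suml; apply: eq_bigr => j _.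
  rewrite !mxE cM; ring.
move=> b ba.
have := congr1 (fun M : 'M[C]_n => M b a) UU; rewrite !mxE (negbTE ba) mulr0n => H.
rewrite (eq_bigr (fun j => f a * (h b)^* * ((U^t*) b j * U j a))).
  by rewrite -mulr_sumr H mulr0.
move=> j _; rewrite !mxE cM; ring.
Qed.

End Gram.

Section Op.
Variable R : realType.
Local Notation C := R[i].
Variable S : finType.

Lemma sum_enum_val (F : S -> C) : \sum_(q < #|S|) F (enum_val q) = \sum_s F s.
Proof.
rewrite (reindex enum_rank) /=; last by apply: onW_bij; apply: enum_rank_bij.
by apply: eq_bigr => s _; rewrite enum_rankK.
Qed.

Lemma sum_enum_valR (F : S -> R) : \sum_(q < #|S|) F (enum_val q) = \sum_s F s.
Proof.
rewrite (reindex enum_rank) /=; last by apply: onW_bij; apply: enum_rank_bij.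
by apply: eq_bigr => s _; rewrite enum_rankK.
Qed.

Lemma opM (f h : S -> S -> C) :
  op_of f *m op_of h = op_of (fun s t => \sum_u f s u * h u t).
Proof.
apply/matrixP => p q; rewrite !mxE.
rewrite -(sum_enum_val (fun u => f (enum_val p) u * h u (enum_val q))).
by apply: eq_bigr => r _; rewrite !mxE.
Qed.

Lemma opT (f : S -> S -> C) : (op_of f)^t* = op_of (fun s t => (f t s)^*).
Proof. by apply/matrixP => p q; rewrite !mxE. Qed.

Lemma opD (D : S -> C) :
  diag_mx (\row_q D (enum_val q)) = op_of (fun s t => (s == t)%:R * D s).
Proof.
apply/matrixP => p q; rewrite !mxE (inj_eq enum_val_inj).
by case: eqP => _; rewrite ?mulr1n ?mul1r ?mulr0n ?mul0r.
Qed.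

Lemma op1 : 1%:M = op_of (fun s t : S => (s == t)%:R) :> 'M[C]_#|S|.
Proof. by apply/matrixP => p q; rewrite !mxE (inj_eq enum_val_inj). Qed.

Lemma opE (f h : S -> S -> C) : (forall s t, f s t = h s t) -> op_of f = op_of h.
Proof. by move=> E; apply/matrixP => p q; rewrite !mxE E. Qed.
End Op.

Section Misc.
Variable R : realType.
Local Notation C := R[i].

Lemma sum_pair (I J : finType) (F : I * J -> C) :
  \sum_u F u = \sum_i \sum_j F (i, j).
Proof. by rewrite pair_big /=; apply: eq_bigr => -[i j]. Qed.

Lemma sum_pairR (I J : finType) (F : I * J -> R) :
  \sum_u F u = \sum_i \sum_j F (i, j).
Proof. by rewrite pair_big /=; apply: eq_bigr => -[i j]. Qed.

Lemma sum_pair1 (I J : finType) (v : I) (F : I * J -> C) :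
  \sum_(u | u.1 == v) F u = \sum_j F (v, j).
Proof.
rewrite big_mkcond sum_pair (bigD1 v) //= [X in _ + X]big1 ?addr0.
  by apply: eq_bigr => j _; rewrite eqxx.
by move=> i iv; apply: big1 => j _ /=; rewrite (negbTE iv).
Qed.

Lemma ip_conj n (f u : 'I_n -> C) : (ip f u)^* = ip u f.
Proof. rewrite /ip cS; apply: eq_bigr => a _; by rewrite cM conjCK mulrC. Qed.

Lemma quad_ex n (I : finType) (p : pred I) (f : I -> 'I_n -> C) u :
  0 < \sum_(i | p i) ip (f i) u * (ip (f i) u)^* -> exists i, p i /\ ip (f i) u != 0.
Proof.
case: (boolP [exists i, p i && (ip (f i) u != 0)]).
  by move=> /existsP [i /andP [h1 h2]]; exists i.
rewrite negb_exists => /forallP H.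
rewrite big1 ?ltxx // => i pi; have := H i; rewrite pi /= negbK => /eqP ->.
by rewrite mul0r.
Qed.

Lemma ex_pos n (I : finType) (p : pred I) (f : I -> 'I_n -> C) u i :
  p i -> ip (f i) u != 0 -> 0 < \sum_(i | p i) ip (f i) u * (ip (f i) u)^*.
Proof.
move=> pi h; rewrite (bigD1 i) //=; apply: ltr_pwDl; first by rewrite mul_conjC_gt0.
apply: sumr_ge0 => j _; exact: mul_conjC_ge0.
Qed.

Lemma ex_transfer n (I J : finType) (p : pred I) (q : pred J)
  (f : I -> 'I_n -> C) (h : J -> 'I_n -> C) u i :
  gram p f = gram q h -> p i -> ip (f i) u != 0 ->
  exists j, q j /\ ip (h j) u != 0.
Proof.
move=> E pi fi; apply: quad_ex; rewrite -gram_quad -E gram_quad.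
exact: ex_pos pi fi.
Qed.

Lemma Re_ge0 (z : C) : 0 <= z -> 0 <= complex.Re z.
Proof. by move=> z0; rewrite -ler0c ReC. Qed.

Lemma xlog2xE (t : R) : 0 <= t -> xlog2x t = t * ln t / ln 2.
Proof.
rewrite /xlog2x /log2 le0r => /orP [/eqP ->|t0]; first by rewrite ltxx !mul0r.
by rewrite t0 mulrA.
Qed.

Lemma sum_delta (I : finType) (f D : I -> C) (u : I) :
  \sum_u' f u' * ((u' == u)%:R * D u') = f u * D u.
Proof.
rewrite (bigD1 u) //= eqxx mul1r big1 ?addr0 // => u' nu.
by rewrite (negbTE nu) mul0r mulr0.
Qed.

Lemma sum_enum_rank (S : finType) (F : 'I_#|S| -> C) :
  \sum_s F (enum_rank s) = \sum_i F i.
Proof.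
rewrite [RHS](reindex enum_rank) //; apply: onW_bij; apply: enum_rank_bij.
Qed.

Lemma sum_enum_rankR (S : finType) (F : 'I_#|S| -> R) :
  \sum_s F (enum_rank s) = \sum_i F i.
Proof.
rewrite [RHS](reindex enum_rank) //; apply: onW_bij; apply: enum_rank_bij.
Qed.

Lemma spec_facts n (M : 'M[C]_n) : M \is normalmx ->
  let U := spectralmx M in
  [/\ U *m U^t* = 1%:M, U^t* *m U = 1%:M,
      M = U^t* *m diag_mx (spectral_diag M) *m U &
      U *m M *m U^t* = diag_mx (spectral_diag M)].
Proof.
move=> /orthomx_spectralP HM U.
have Uu : U \is unitarymx by apply: spectral_unitarymx.
have h1 : U *m U^t* = 1%:M by apply/unitarymxP.
have h2 : U^t* *m U = 1%:M.
  by rewrite -invmx_unitary // mulVmx // unitarymx_unit.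
have h3 : M = U^t* *m diag_mx (spectral_diag M) *m U.
  by rewrite -invmx_unitary.
split => //.
by rewrite {1}h3 !mulmxA h1 mul1mx -mulmxA h1 mulmx1.
Qed.

Lemma conj_diag_entry n (U : 'M[C]_n) (d : 'rV[C]_n) a b :
  (U^t* *m diag_mx d *m U) a b = \sum_i (U i a)^* * d 0 i * U i b.
Proof.
rewrite mul_mx_diag mxE; apply: eq_bigr => i _; by rewrite !mxE.
Qed.

Lemma canE (X Y : finType) (P : X -> Y -> R) x y :
  canonical_embedding P x y = (Num.sqrt (P x y))%:C.
Proof. by rewrite /canonical_embedding /regular_embedding cos0 sin0 mul1r. Qed.

Lemma sqrtC_conj (z : C) : 0 <= z -> sqrtC z * (sqrtC z)^* = z.
Proof.
move=> z0; rewrite conj_Creal ?ger0_real ?sqrtC_ge0 //.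
by rewrite -expr2 sqrtCK.
Qed.

End Misc.

Section App.
Variable R : realType.
Local Notation C := R[i].
Variables (X Y : finType) (T : eqType) (P : X -> Y -> R) (g : X -> T).
Hypothesis P0 : forall x y, 0 <= P x y.

Local Notation n := #|Y|.
Local Notation vals := (values g).
Local Notation m := (size (values g)).

Definition psi x (a : 'I_n) : C := (Num.sqrt (P x (enum_val a)))%:C.
Definition cls (v : 'I_m) x := g x == tnth (in_tuple vals) v.

Lemma gx_in x : g x \in vals.
Proof. by rewrite /values mem_undup; apply: map_f; rewrite mem_enum. Qed.

Definition idx x : 'I_m := Ordinal (etrans (index_mem _ _) (gx_in x)).

Lemma cls_idx x : cls (idx x) x.
Proof. by rewrite /cls (tnth_nth (g x)) /= nth_index // gx_in. Qed.

Lemma cls_uniq v x : cls v x -> v = idx x.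
Proof.
rewrite /cls (tnth_nth (g x)) /= => /eqP e; apply: val_inj => /=.
by rewrite e index_uniq // undup_uniq.
Qed.

Lemma partition_cls (F : X -> C) :
  \sum_x F x = \sum_v \sum_(x | cls v x) F x.
Proof.
under [RHS]eq_bigr => v _ do rewrite big_mkcond /=.
rewrite exchange_big /=; apply: eq_bigr => x _.
rewrite (bigD1 (idx x)) //= cls_idx big1 ?addr0 // => v nv.
by case: ifP => // /cls_uniq e; rewrite e eqxx in nv.
Qed.

Definition A (v : 'I_m) : 'M[C]_n := gram (cls v) psi.

Definition U v := spectralmx (A v).
Definition d v := spectral_diag (A v).

Lemma A_facts v :
  [/\ U v *m (U v)^t* = 1%:M, (U v)^t* *m U v = 1%:M,
      A v = (U v)^t* *m diag_mx (d v) *m U v &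
      U v *m A v *m (U v)^t* = diag_mx (d v)].
Proof. exact: (spec_facts (gram_normal _ _)). Qed.

Lemma d_ge0 v i : 0 <= d v 0 i.
Proof.
have [_ _ _ h] := A_facts v.
have := congr1 (fun M : 'M[C]_n => M i i) h; rewrite gram_conj mxE eqxx mulr1n => <-.
apply: sumr_ge0 => x _; exact: mul_conjC_ge0.
Qed.

Definition phi (k : 'I_m * 'I_n) (a : 'I_n) : C :=
  sqrtC (d k.1 0 k.2) * (U k.1 k.2 a)^*.

Lemma A_phi v : A v = gram (fun k : 'I_m * 'I_n => k.1 == v) phi.
Proof.
have [_ _ h _] := A_facts v.
apply/matrixP => a b; rewrite {1}h conj_diag_entry [in RHS]mxE.
rewrite sum_pair1; apply: eq_bigr => i _.
rewrite /phi /= cM conjCK.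
rewrite -[in LHS](sqrtC_conj (d_ge0 v i)); ring.
Qed.


Lemma rhoB_psi : rhoB (canonical_embedding P) = gram predT psi.
Proof.
apply/matrixP => a b; rewrite !mxE; apply: eq_bigr => x _.
by rewrite !canE.
Qed.

Lemma gram_psi_phi : gram predT psi = gram predT phi.
Proof.
apply/matrixP => a b; rewrite !mxE partition_cls.
rewrite (partition_big (fun k : 'I_m * 'I_n => k.1) predT) //=.
apply: eq_bigr => v _.
have := congr1 (fun M : 'M[C]_n => M a b) (A_phi v); rewrite /A !mxE => ->.
by apply: eq_bigr.
Qed.


Definition MB := gram predT psi.
Definition UB := spectralmx MB.
Definition mud := spectral_diag MB.
Definition beta (k : 'I_m * 'I_n) (j : 'I_n) := \sum_a UB j a * phi k a.

Lemma B_facts :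
  [/\ UB *m UB^t* = 1%:M, UB^t* *m UB = 1%:M,
      MB = UB^t* *m diag_mx mud *m UB &
      UB *m MB *m UB^t* = diag_mx mud].
Proof. exact: (spec_facts (gram_normal _ _)). Qed.

Lemma B_entry j' j : \sum_k beta k j' * (beta k j)^* = mud 0 j' *+ (j' == j).
Proof.
have [_ _ _ h] := B_facts.
have := congr1 (fun M : 'M[C]_n => M j' j) h.
by rewrite /MB gram_psi_phi gram_conj mxE => <-.
Qed.

Lemma B_orth j j' : j != j' -> \sum_k beta k j' * (beta k j)^* = 0.
Proof. by move=> jj; rewrite B_entry eq_sym (negbTE jj) mulr0n. Qed.

Lemma B_diag j : \sum_k beta k j * (beta k j)^* = mud 0 j.
Proof. by rewrite B_entry eqxx mulr1n. Qed.

Lemma B_par k l : \sum_j beta k j * (beta l j)^* = ip (phi k) (phi l).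
Proof. have [_ h _ _] := B_facts; exact: parseval. Qed.

Lemma ip_phi k : ip (phi k) (phi k) = d k.1 0 k.2.
Proof.
have [h _ _ _] := A_facts k.1.
have := congr1 (fun M : 'M[C]_n => M k.2 k.2) h; rewrite !mxE eqxx mulr1n => H.
rewrite /ip -[RHS]mulr1 -H mulr_sumr; apply: eq_bigr => a _.
rewrite /phi !mxE cM conjCK -[in RHS](sqrtC_conj (d_ge0 k.1 k.2)); ring.
Qed.

Lemma vN_B : vN_entropy (rhoB (canonical_embedding P)) =
  - \sum_j xlog2x (complex.Re (mud 0 j)).
Proof.
have [_ h2 h3 _] := B_facts.
by rewrite rhoB_psi -/MB /vN_entropy [X in spectrum X]h3 (@spectrum_sum _ _ _ _ _ _ h2).
Qed.


Definition wZ (s t : 'I_m * Y) : C :=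
  (s.1 == t.1)%:R * U s.1 (enum_rank s.2) (enum_rank t.2).
Definition DZ (s : 'I_m * Y) : C := d s.1 0 (enum_rank s.2).
Definition WZ := op_of wZ.

Lemma blk (e : 'I_m -> 'I_n -> C) (s t : 'I_m * Y) :
  \sum_u (wZ u s)^* * e u.1 (enum_rank u.2) * wZ u t =
  (s.1 == t.1)%:R *
    \sum_i (U s.1 i (enum_rank s.2))^* * e s.1 i * U s.1 i (enum_rank t.2).
Proof.
rewrite sum_pair (bigD1 s.1) //= [X in _ + X]big1 ?addr0.
  rewrite mulr_sumr -(sum_enum_rank
    (fun i => (s.1 == t.1)%:R * ((U s.1 i (enum_rank s.2))^* * e s.1 i *
      U s.1 i (enum_rank t.2)))).
  apply: eq_bigr => y _; rewrite /wZ /= eqxx /= cM.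
  rewrite (_ : (1%:R : C)^* = 1); last by rewrite rmorph1.
  ring.
move=> v vs; apply: big1 => y _; rewrite /wZ /= (negbTE vs) /= cM.
rewrite (_ : (0%:R : C)^* = 0); last by rewrite rmorph0.
by rewrite !mul0r.
Qed.


Lemma WZ_unit : WZ^t* *m WZ = 1%:M.
Proof.
rewrite /WZ opT opM op1; apply: opE => -[v1 y1] [v2 y2].
have Hb := blk (fun _ _ => 1) (v1, y1) (v2, y2); simpl in Hb.
rewrite (eq_bigr (fun u => (wZ u (v1, y1))^* * 1 * wZ u (v2, y2)));
  last by move=> u _; rewrite mulr1.
rewrite Hb.
have [_ h2 _ _] := A_facts v1.
have -> : \sum_i (U v1 i (enum_rank y1))^* * 1 * U v1 i (enum_rank y2) =
  ((U v1)^t* *m U v1) (enum_rank y1) (enum_rank y2).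
  by rewrite mxE; apply: eq_bigr => i _; rewrite !mxE mulr1.
rewrite h2 mxE (inj_eq enum_rank_inj) xpair_eqE.
by case: (v1 == v2); case: (y1 == y2); rewrite ?mulr1 ?mul1r ?mulr0 ?mul0r.
Qed.

Lemma rhoZB_dec : rhoZB (canonical_embedding P) g =
  WZ^t* *m diag_mx (\row_q DZ (enum_val q)) *m WZ.
Proof.
rewrite /WZ opD opT opM opM /rhoZB; apply: opE => -[v1 y1] [v2 y2].
rewrite -[(v1, y1).1]/v1 -[(v2, y2).1]/v2 -[(v1, y1).2]/y1 -[(v2, y2).2]/y2.
under [RHS]eq_bigr => u _ do rewrite sum_delta.
rewrite (eq_bigr (fun u => (wZ u (v1, y1))^* * d u.1 0 (enum_rank u.2)
   * wZ u (v2, y2))) //.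
have Hb := blk (fun v i => d v 0 i) (v1, y1) (v2, y2); simpl in Hb.
rewrite Hb.
have [_ _ h3 _] := A_facts v1.
rewrite -conj_diag_entry -h3 /A mxE.
case: (v1 == v2); last by rewrite mul0r.
rewrite mul1r; apply: eq_bigr => x _.
by rewrite /psi !enum_rankK !canE.
Qed.

Lemma vN_ZB : vN_entropy (rhoZB (canonical_embedding P) g) =
  - \sum_(k : 'I_m * 'I_n) xlog2x (complex.Re (d k.1 0 k.2)).
Proof.
rewrite /vN_entropy rhoZB_dec (@spectrum_sum _ _ _ _ _ _ WZ_unit).
congr (- _).
under eq_bigr => q _ do rewrite mxE.
rewrite (sum_enum_valR (fun s => xlog2x (complex.Re (DZ s)))).
rewrite sum_pairR [RHS]sum_pairR; apply: eq_bigr => v _.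
by rewrite (sum_enum_rankR (fun i => xlog2x (complex.Re (d v 0 i)))).
Qed.


Lemma ip_psi_pos x1 x2 y : 0 < P x1 y -> 0 < P x2 y -> ip (psi x1) (psi x2) != 0.
Proof.
move=> h1 h2.
have -> : ip (psi x1) (psi x2) =
  (\sum_(a : 'I_n) Num.sqrt (P x1 (enum_val a)) * Num.sqrt (P x2 (enum_val a)))%:C.
  rewrite /ip rmorph_sum; apply: eq_bigr => a _; by rewrite /psi cR rmorphM.
rewrite fmorph_eq0 gt_eqF //.
apply: (lt_le_trans _ (@term_le_sum _ _
   (fun a : 'I_n => Num.sqrt (P x1 (enum_val a)) * Num.sqrt (P x2 (enum_val a))) (enum_rank y) _)).
  by rewrite /= enum_rankK mulr_gt0 // sqrtr_gt0.
by move=> a; rewrite mulr_ge0 // sqrtr_ge0.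
Qed.

Lemma witness_app :
  (exists y x1 x2, 0 < P x1 y /\ 0 < P x2 y /\ g x1 != g x2) ->
  exists k l, k != l /\ \sum_j beta k j * (beta l j)^* != 0.
Proof.
move=> [y [x1 [x2 [h1 [h2 hg]]]]].
set v1 := idx x1; set v2 := idx x2.
have v12 : v1 != v2.
  apply: contra hg => /eqP e.
  have c1 := cls_idx x1; have c2 := cls_idx x2.
  by rewrite /cls -/v1 -/v2 e in c1 c2; rewrite (eqP c1) (eqP c2).
have [k [/eqP k1 hk]] : exists k : 'I_m * 'I_n, k.1 == v1 /\ ip (phi k) (psi x2) != 0.
  apply: (ex_transfer (p := cls v1) (f := psi) (i := x1)).
    exact: A_phi.
  exact: cls_idx.
  exact: ip_psi_pos h1 h2.
have [l [/eqP l1 hl]] : exists l : 'I_m * 'I_n, l.1 == v2 /\ ip (phi l) (phi k) != 0.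
  apply: (ex_transfer (p := cls v2) (f := psi) (i := x2)).
    exact: A_phi.
  exact: cls_idx.
  by rewrite -ip_conj conjC_eq0.
exists l, k; split.
  by apply: contra v12 => /eqP e; rewrite -k1 -l1 e.
by rewrite B_par.
Qed.

Lemma S_pos :
  (exists y x1 x2, 0 < P x1 y /\ 0 < P x2 y /\ g x1 != g x2) ->
  0 < S_cond (canonical_embedding P) g.
Proof.
move=> /witness_app W.
have core := @core_C R _ _ beta B_orth W.
rewrite /S_cond vN_ZB vN_B opprK addrC.
have nnE k : \sum_j complex.Re (beta k j * (beta k j)^*) = complex.Re (d k.1 0 k.2).
  by rewrite -Re_sum B_par ip_phi.
have muE j : \sum_k complex.Re (beta k j * (beta k j)^*) = complex.Re (mud 0 j).
  by rewrite -Re_sum B_diag.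
have core' : \sum_k (\sum_j complex.Re (beta k j * (beta k j)^*)) *
   ln (\sum_j complex.Re (beta k j * (beta k j)^*)) <
   \sum_j (\sum_k complex.Re (beta k j * (beta k j)^*)) *
   ln (\sum_k complex.Re (beta k j * (beta k j)^*)) := core.
have E1 : \sum_k (\sum_j complex.Re (beta k j * (beta k j)^*)) *
   ln (\sum_j complex.Re (beta k j * (beta k j)^*)) =
   \sum_k complex.Re (d k.1 0 k.2) * ln (complex.Re (d k.1 0 k.2)).
  by apply: eq_bigr => k _; rewrite nnE.
have E2 : \sum_j (\sum_k complex.Re (beta k j * (beta k j)^*)) *
   ln (\sum_k complex.Re (beta k j * (beta k j)^*)) =
   \sum_j complex.Re (mud 0 j) * ln (complex.Re (mud 0 j)).
  by apply: eq_bigr => j _; rewrite muE.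
rewrite E1 E2 in core'.
have mud0 j : 0 <= complex.Re (mud 0 j).
  by apply: Re_ge0; rewrite -B_diag; apply: sumr_ge0 => k _; exact: mul_conjC_ge0.
have d0 k : 0 <= complex.Re (d k.1 0 k.2) by apply: Re_ge0; exact: d_ge0.
under eq_bigr => j _ do rewrite xlog2xE //.
under [X in _ - X]eq_bigr => k _ do rewrite xlog2xE //.
rewrite -!mulr_suml -mulrBl; apply: divr_gt0; first by rewrite subr_gt0.
by rewrite ln_gt0 // ltr1n.
Qed.


End App.


Section Classical.
Variable R : realType.
Variables (X Y : finType) (P : X -> Y -> R).
Hypothesis P0 : forall x y, 0 <= P x y.

Lemma xlog2x0 : xlog2x (0 : R) = 0.
Proof. by rewrite /xlog2x ltxx. Qed.

Lemma le0_eq0 (x : X) y : ~~ (0 < P x y) -> P x y = 0.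
Proof. by move=> h; apply/eqP; rewrite eq_le P0 andbT leNgt. Qed.

Lemma Hcond_zero (T : eqType) (g : X -> T) :
  (forall y x1 x2, 0 < P x1 y -> 0 < P x2 y -> g x1 = g x2) ->
  H_cond P g = 0.
Proof.
move=> Hg; rewrite /H_cond /H_joint /HY exchange_big /=.
rewrite (eq_bigr (fun y => xlog2x (marginalY P y))) ?opprK ?addNr // => y _.
case: (boolP [exists x, 0 < P x y]) => [/existsP [x0 hx0]|].
  have mem : g x0 \in values g.
    by rewrite /values mem_undup; apply: map_f; rewrite mem_enum.
  rewrite (bigD1_seq (g x0)) //= ?undup_uniq // [X in _ + X]big1_seq ?addr0.
    congr xlog2x; rewrite /marginalY [RHS](bigID (fun x => g x == g x0)) /=.
    rewrite [X in _ = _ + X]big1 ?addr0 // => x /negP hx.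
    apply: le0_eq0; apply: contra_notN hx => hx'; apply/eqP; exact: Hg hx' hx0.
  move=> v /andP [vx _]; rewrite big1 ?xlog2x0 // => x /eqP gv.
  apply: le0_eq0; apply/negP => hx; move: vx; by rewrite -gv (Hg _ _ _ hx hx0) eqxx.
rewrite negb_exists => /forallP H0.
have z x : P x y = 0 by apply: le0_eq0; exact: H0.
have m0 : marginalY P y = 0 by rewrite /marginalY big1 // => x _; rewrite z.
rewrite m0 xlog2x0 big1_seq // => v _; rewrite big1 ?xlog2x0 // => x _; exact: z.
Qed.


Lemma swap_cond :
  (forall x y1 y2, 0 < P x y1 -> 0 < P x y2 ->
     depX (swapP P) y1 = depX (swapP P) y2) ->
  forall y x1 x2, 0 < P x1 y -> 0 < P x2 y -> depX P x1 = depX P x2.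
Proof.
move=> Hs y x1 x2 h1 h2.
pose PY y := \sum_x P x y.
pose r y' := if [exists x, (0 < P x y') && (0 < P x y)] then PY y' / PY y else 0.
have PYge x y' : P x y' <= PY y'.
  by apply: (@term_le_sum _ _ (fun x => P x y') x) => x'; exact: P0.
have key x : 0 < P x y -> forall y', P x y' = r y' * P x y.
  move=> hx y'; rewrite /r; case: (boolP [exists x, _]).
    move=> /existsP [x0 /andP [a b]].
    have := congr1 (fun f : {ffun X -> R} => f x) (Hs x0 y' y a b); rewrite !ffunE.
    rewrite /marginalX /swapP -/(PY y') -/(PY y) => E.
    have py0 : 0 < PY y by apply: lt_le_trans hx (PYge x y).
    have py0' : 0 < PY y' by apply: lt_le_trans a (PYge x0 y').
    move/(congr1 (fun t => t * PY y')): E; rewrite divfK ?gt_eqF // => ->.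
    by field; rewrite gt_eqF.
  rewrite negb_exists => /forallP /(_ x); rewrite hx andbT mul0r => /le0_eq0.
  exact.
have PX x : 0 < P x y -> marginalX P x = P x y * \sum_y' r y'.
  move=> hx; rewrite /marginalX mulr_sumr; apply: eq_bigr => y' _.
  by rewrite (key x hx) mulrC.
have val x : 0 < P x y -> forall y', P x y' / marginalX P x = r y' / \sum_y' r y'.
  move=> hx y'; rewrite (PX x hx) (key x hx).
  have [S0|S0] := eqVneq (\sum_y' r y') 0; first by rewrite S0 !mulr0 !invr0 !mulr0.
  by field; rewrite S0 gt_eqF.
apply/ffunP => y'; rewrite !ffunE (val x1 h1) (val x2 h2) //.
Qed.

End Classical.

Theorem lemma1 (R : realType) (X Y : finType) (P : X -> Y -> R) :
  is_primitive P -> nontrivial_primitive P ->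
  0 < S_XdepY_B P (canonical_embedding P) /\
  0 < S_YdepX_A P (canonical_embedding P).
Proof.
move=> [P0 _] nt.
have P0' : forall y x, 0 <= swapP P y x by move=> y x; exact: P0.
split.
  apply: S_pos.
  case: (boolP [exists y, exists x1, exists x2,
     [&& 0 < P x1 y, 0 < P x2 y & depX P x1 != depX P x2]]).
    move=> /existsP [y /existsP [x1 /existsP [x2 /and3P [a b c]]]].
    by exists y, x1, x2.
  move=> H; exfalso; apply: nt; apply: Hcond_zero => // y x1 x2 a b.
  apply/eqP; apply: contraNT H => c; apply/existsP; exists y.
  by apply/existsP; exists x1; apply/existsP; exists x2; rewrite a b c.
have := @S_pos R Y X _ (swapP P) (depX (swapP P)).
apply.
case: (boolP [exists x, exists y1, exists y2,
   [&& 0 < P x y1, 0 < P x y2 & depX (swapP P) y1 != depX (swapP P) y2]]).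
  move=> /existsP [x /existsP [y1 /existsP [y2 /and3P [a b c]]]].
  by exists x, y1, y2.
move=> H; exfalso; apply: nt; apply: Hcond_zero => //.
apply: swap_cond => // x y1 y2 a b.
apply/eqP; apply: contraNT H => c; apply/existsP; exists x.
by apply/existsP; exists y1; apply/existsP; exists y2; rewrite a b c.
Qed.
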